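(* Let $\Gamma_H$ be the H-junction tree with edges $e_1,\dots,e_5$ of propagation times $t_1,\dots,t_5$, linearly independent over $\mathbb{Q}$, where the two interior vertices are $A$ (incident to $e_1,e_2,e_3$) and $B$ (incident to $e_3,e_4,e_5$). Then there is a constant $C$ independent of $T$ such that for all $T\ge 0$ $$N(\Gamma_H, A, A, T) = \#[2n_1t_1 + 2n_3t_3 + 2n_4t_4 + 2n_5t_5 \le T] + \#[2n_2t_2 + 2n_3t_3 + 2n_4t_4 + 2n_5t_5 \le T] - \#[2n_1t_1 + 2n_4t_4 + 2n_5t_5 \le T] - \#[2n_2t_2 + 2n_4t_4 + 2n_5t_5 \le T] + \#[2n_1t_1 + 2n_2t_2 \le T] + \#[2n_1t_1 \le T] + \#[2n_2t_2 \le T] + C.$$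
   Context: $\Gamma_H$ has six vertices: $A$, $B$, and the four distinct valence-one endpoints of $e_1,e_2,e_4,e_5$ other than $A$, $B$; $e_3$ joins $A$ and $B$. Dynamics: each edge $e_i$ is traversed in time $t_i$; at time $0$ the process starts at $A$ (a point departs from $A$ along each incident edge); at a valence-one vertex a point is reflected; if $k$ points arrive simultaneously at an interior vertex of valence $v$, then $v$ points leave it, one along each incident edge, and $v-k$ new points are said to be born there. $N(\Gamma,A,X,T)$ is the total number of new points born at vertex $X$ up to the moment $T$ when the process starts at $A$. $\#[\text{inequality}]$ denotes the number of tuples of nonnegative integers $n_i$ satisfying the inequality. *)

(* Defs.v *)
From Stdlib Require Import Reals QArith Qreals List ClassicalEpsilon.
Import ListNotations.
Open Scope R_scope.

Definition count_is {X : Type} (P : X -> Prop) (n : nat) : Prop :=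
  exists l : list X, NoDup l /\ (forall x, In x l <-> P x) /\ length l = n.

(* The number of elements of P (P finite); 0 by convention if P is infinite
   (never used in that case: all sets counted below are finite). *)
Definition ncard {X : Type} (P : X -> Prop) : nat :=
  match excluded_middle_informative (exists n, count_is P n) with
  | left H => proj1_sig (constructive_indefinite_description _ H)
  | right _ => 0%nat
  end.

Fixpoint wsum (c : list R) (n : list nat) : R :=
  match c, n with
  | ci :: c', ni :: n' => ci * INR ni + wsum c' n'
  | _, _ => 0
  end.

(* #[ c_1 n_1 + ... + c_k n_k <= T ] : number of tuples (n_1,...,n_k) of
   nonnegative integers satisfying the inequality. *)
Definition lattice_count (c : list R) (T : R) : nat :=
  ncard (fun n : list nat => length n = length c /\ wsum c n <= T).

(* A, B interior; L1, L2, L4, L5 the valence-one endpoints of e1, e2, e4, e5. *)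
Inductive vertex := vA | vB | vL1 | vL2 | vL4 | vL5.
Inductive edge := e1 | e2 | e3 | e4 | e5.

Definition ends (e : edge) : vertex * vertex :=
  match e with
  | e1 => (vA, vL1)
  | e2 => (vA, vL2)
  | e3 => (vA, vB)
  | e4 => (vB, vL4)
  | e5 => (vB, vL5)
  end.

Definition link (e : edge) (X Y : vertex) : Prop :=
  ends e = (X, Y) \/ ends e = (Y, X).

Definition incident (e : edge) (X : vertex) : Prop := exists Y, link e X Y.

Definition tH (t1 t2 t3 t4 t5 : R) (e : edge) : R :=
  match e with e1 => t1 | e2 => t2 | e3 => t3 | e4 => t4 | e5 => t5 end.

(* [departs t X0 X s]: at time s points leave vertex X, one along each
   incident edge (process started at X0 at time 0).  A point leaving X along e
   at time s arrives at the other end Y at time s + t e; any arrival at Y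
   (at an interior vertex, or a reflection at a leaf) makes points leave Y
   along every edge incident to Y at that moment. *)
Inductive departs (t : edge -> R) (X0 : vertex) : vertex -> R -> Prop :=
| dep_start : departs t X0 X0 0
| dep_step : forall e X Y s,
    link e X Y -> departs t X0 X s -> departs t X0 Y (s + t e).

Definition arrives (t : edge -> R) (X0 : vertex) (e : edge) (Y : vertex) (tau : R) : Prop :=
  exists X, link e X Y /\ departs t X0 X (tau - t e).

(* Newborn points at X: when k points arrive simultaneously at X (valence v),
   v points leave and v - k are born; we index the born points by
   (time, incident edge without an arriving point). *)
Definition birth (t : edge -> R) (X0 X : vertex) (T : R) (p : R * edge) : Prop :=
  fst p <= T /\ departs t X0 X (fst p) /\ incident (snd p) X /\
  ~ arrives t X0 (snd p) X (fst p).

Definition N_H (t : edge -> R) (X0 X : vertex) (T : R) : nat :=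
  ncard (birth t X0 X T).

Definition Q_lin_indep5 (t1 t2 t3 t4 t5 : R) : Prop :=
  forall q1 q2 q3 q4 q5 : Q,
    Q2R q1 * t1 + Q2R q2 * t2 + Q2R q3 * t3 + Q2R q4 * t4 + Q2R q5 * t5 = 0 ->
    q1 == 0 /\ q2 == 0 /\ q3 == 0 /\ q4 == 0 /\ q5 == 0.

(* Main.v *)
Require Import Defs.
From Stdlib Require Import Reals QArith Qreals List ZArith.
From Stdlib Require Import Lia Lra Classical ClassicalEpsilon.
Import ListNotations.
Open Scope R_scope.

Lemma count_unique {X : Type} (P : X -> Prop) n m :
  count_is P n -> count_is P m -> n = m.
Proof.
  intros [l1 [N1 [M1 L1]]] [l2 [N2 [M2 L2]]].
  assert (length l1 <= length l2)%nat.
  { apply NoDup_incl_length; auto. intros x Hx; apply M2, M1, Hx. }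
  assert (length l2 <= length l1)%nat.
  { apply NoDup_incl_length; auto. intros x Hx; apply M1, M2, Hx. }
  lia.
Qed.

Lemma ncard_eq {X : Type} (P : X -> Prop) n : count_is P n -> ncard P = n.
Proof.
  intro H. unfold ncard. destruct excluded_middle_informative as [H'|H'].
  - destruct (constructive_indefinite_description _ H') as [k Hk]; simpl.
    eapply count_unique; eauto.
  - exfalso; apply H'; eauto.
Qed.

Lemma count_ext {X : Type} (P Q : X -> Prop) n :
  (forall x, P x <-> Q x) -> count_is P n -> count_is Q n.
Proof.
  intros E [l [N [M L]]]. exists l; split; auto; split; auto.
  intro x; rewrite M; apply E.
Qed.

Lemma count_union {X : Type} (P Q : X -> Prop) a b :
  count_is P a -> count_is Q b -> (forall x, P x -> Q x -> False) ->
  count_is (fun x => P x \/ Q x) (a + b).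
Proof.
  intros [l1 [N1 [M1 L1]]] [l2 [N2 [M2 L2]]] D.
  exists (l1 ++ l2); split; [|split].
  - apply NoDup_app; auto. intros x H1 H2. apply (D x); [apply M1|apply M2]; auto.
  - intro x; rewrite in_app_iff, M1, M2; tauto.
  - rewrite length_app; lia.
Qed.

Lemma nodup_map_inj {X Y : Type} (P : X -> Prop) (f : X -> Y) l :
  (forall x y, P x -> P y -> f x = f y -> x = y) ->
  NoDup l -> (forall x, In x l -> P x) -> NoDup (map f l).
Proof.
  intros I; induction l as [|a l IH]; intros N H; simpl; constructor.
  - intro Hin. apply in_map_iff in Hin. destruct Hin as [x [E Hx]].
    inversion N; subst. assert (x = a) by (apply I; auto; apply H; simpl; auto).
    subst; contradiction.
  - inversion N; subst; apply IH; auto. intros; apply H; simpl; auto.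
Qed.

Lemma count_image {X Y : Type} (P : X -> Prop) (f : X -> Y) n :
  count_is P n -> (forall x y, P x -> P y -> f x = f y -> x = y) ->
  count_is (fun y => exists x, P x /\ y = f x) n.
Proof.
  intros [l [N [M L]]] I. exists (map f l); split; [|split].
  - eapply nodup_map_inj; eauto. intros; apply M; auto.
  - intro y; rewrite in_map_iff; split.
    + intros [x [E Hx]]; exists x; split; [apply M|]; auto.
    + intros [x [Hx E]]; exists x; split; [|apply M]; auto.
  - rewrite length_map; auto.
Qed.

Lemma count_finite_list {X : Type} (l : list X) : forall (P : X -> Prop),
  (forall x, P x -> In x l) -> exists n, count_is P n.
Proof.
  induction l as [|a l IH]; intros P H.
  - exists 0%nat, []; split; [constructor|split; auto].
    intro x; split; [intro F; destruct F|intro Hp; apply (H x Hp)].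
  - destruct (IH (fun x => P x /\ x <> a)) as [n [k [N [M L]]]].
    { intros x [Hp Hn]. destruct (H x Hp); auto. subst; contradiction. }
    destruct (classic (P a)) as [Pa|Pa].
    + exists (S n), (a :: k); split; [|split].
      * constructor; auto. intro Hin; apply M in Hin; tauto.
      * intro x; simpl; split.
        -- intros [E|Hx]; [subst; auto|apply M in Hx; tauto].
        -- intro Hx. destruct (classic (a = x)); auto. right; apply M; auto.
      * simpl; lia.
    + exists n, k; split; [|split]; auto.
      intro x; rewrite M; split; [tauto|]. intro Hx; split; auto.
      intro E; subst; contradiction.
Qed.

Lemma count_subset {X : Type} (P Q : X -> Prop) n :
  count_is P n -> (forall x, Q x -> P x) -> exists m, count_is Q m.
Proof.
  intros [l [N [M L]]] H. apply (count_finite_list l). intros; apply M, H; auto.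
Qed.

Lemma wsum_nonneg c n : Forall (fun x => 0 < x) c -> 0 <= wsum c n.
Proof.
  revert n; induction c as [|a c IH]; intros n F; destruct n as [|i n]; simpl; try lra.
  inversion F; subst. specialize (IH n H2). pose proof (pos_INR i).
  assert (0 <= a * INR i) by (apply Rmult_le_pos; lra). lra.
Qed.

Definition LS (c : list R) (T : R) : list nat -> Prop :=
  fun n => length n = length c /\ wsum c n <= T.

Lemma LS_finite c T : Forall (fun x => 0 < x) c -> exists k, count_is (LS c T) k.
Proof.
  induction c as [|a c IH]; intro F.
  - apply (count_finite_list [[]]). intros x [Hl _]. destruct x; simpl in *; auto; discriminate.
  - inversion F; subst. destruct (IH H2) as [k [l [N [M L]]]].
    destruct (INR_archimed a T H1) as [B HB].
    apply (count_finite_list (flat_map (fun i => map (cons i) l) (seq 0 B))).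
    intros x [Hl Hw]. destruct x as [|i x]; simpl in Hl; [discriminate|].
    simpl in Hw. pose proof (wsum_nonneg c x H2). pose proof (pos_INR i).
    apply in_flat_map. exists i; split.
    + apply in_seq. split; [lia|]. simpl.
      destruct (Nat.lt_ge_cases i B) as [Hi|Hi]; auto.
      apply le_INR in Hi.
      assert (a * INR B <= a * INR i) by (apply Rmult_le_compat_l; lra). lra.
    + apply in_map. apply M. split; [lia|].
      assert (0 <= a * INR i) by (apply Rmult_le_pos; lra). lra.
Qed.

Lemma lattice_count_eq c T k : count_is (LS c T) k -> lattice_count c T = k.
Proof. intro H; unfold lattice_count; apply ncard_eq; exact H. Qed.

Definition pz (n : nat) (b : Z) : Prop := (Z.of_nat n mod 2 = b)%Z.

Definition parX (X : vertex) (n1 n2 n3 n4 n5 : nat) : Prop :=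
  match X with
  | vA => pz n1 0 /\ pz n2 0 /\ pz n3 0 /\ pz n4 0 /\ pz n5 0
  | vL1 => pz n1 1 /\ pz n2 0 /\ pz n3 0 /\ pz n4 0 /\ pz n5 0
  | vL2 => pz n1 0 /\ pz n2 1 /\ pz n3 0 /\ pz n4 0 /\ pz n5 0
  | vB => pz n1 0 /\ pz n2 0 /\ pz n3 1 /\ pz n4 0 /\ pz n5 0
  | vL4 => pz n1 0 /\ pz n2 0 /\ pz n3 1 /\ pz n4 1 /\ pz n5 0
  | vL5 => pz n1 0 /\ pz n2 0 /\ pz n3 1 /\ pz n4 0 /\ pz n5 1
  end.

Ltac pl := unfold pz in *; Z.div_mod_to_equations; lia.

Lemma dep_sound t X s : departs t vA X s ->
  exists n1 n2 n3 n4 n5 : nat,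
    s = INR n1 * t e1 + INR n2 * t e2 + INR n3 * t e3 + INR n4 * t e4 + INR n5 * t e5 /\
    parX X n1 n2 n3 n4 n5 /\ ((n4 > 0)%nat \/ (n5 > 0)%nat -> (n3 > 0)%nat).
Proof.
  induction 1 as [|e X Y s Hl Hd IH].
  - exists 0%nat, 0%nat, 0%nat, 0%nat, 0%nat; simpl; split; [ring|]. split; [pl|lia].
  - destruct IH as [n1 [n2 [n3 [n4 [n5 [Hs [Hp Hc]]]]]]].
    destruct e; unfold link in Hl; simpl in Hl; destruct Hl as [Hl|Hl];
      inversion Hl; subst; simpl in Hp;
      first
      [ exists (S n1), n2, n3, n4, n5; split; [rewrite S_INR; ring|simpl; split; [pl|pl]]
      | exists n1, (S n2), n3, n4, n5; split; [rewrite S_INR; ring|simpl; split; [pl|pl]]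
      | exists n1, n2, (S n3), n4, n5; split; [rewrite S_INR; ring|simpl; split; [pl|pl]]
      | exists n1, n2, n3, (S n4), n5; split; [rewrite S_INR; ring|simpl; split; [pl|pl]]
      | exists n1, n2, n3, n4, (S n5); split; [rewrite S_INR; ring|simpl; split; [pl|pl]] ].
Qed.

Definition tw (t : edge -> R) (a1 a2 a3 a4 a5 : nat) : R :=
  2 * t e1 * INR a1 + 2 * t e2 * INR a2 + 2 * t e3 * INR a3 + 2 * t e4 * INR a4 + 2 * t e5 * INR a5.

Lemma dep_eq t X0 X s s' : departs t X0 X s -> s = s' -> departs t X0 X s'.
Proof. intros H E; subst; auto. Qed.

Lemma link_sym e X Y : link e X Y -> link e Y X.
Proof. unfold link; tauto. Qed.

Lemma bounceN t X0 e X Y s : link e X Y -> departs t X0 X s ->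
  forall k, departs t X0 X (s + 2 * t e * INR k).
Proof.
  intros Hl Hd k; induction k.
  - apply (dep_eq _ _ _ s); auto. simpl; ring.
  - apply (dep_eq _ _ _ (s + 2 * t e * INR k + t e + t e)).
    + apply (dep_step t X0 e Y X). apply link_sym; auto. apply (dep_step t X0 e X Y); auto.
    + rewrite S_INR; ring.
Qed.

Ltac lk := unfold link; simpl; auto.

Lemma depB t m1 m2 p m4 m5 :
  departs t vA vB (tw t m1 m2 (S p) m4 m5 - t e3).
Proof.
  pose proof (bounceN t vA e1 vA vL1 0 ltac:(lk) (dep_start _ _) m1) as H1.
  pose proof (bounceN t vA e2 vA vL2 _ ltac:(lk) H1 m2) as H2.
  pose proof (dep_step t vA e3 vA vB _ ltac:(lk) H2) as H3.
  pose proof (bounceN t vA e4 vB vL4 _ ltac:(lk) H3 m4) as H4.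
  pose proof (bounceN t vA e5 vB vL5 _ ltac:(lk) H4 m5) as H5.
  pose proof (bounceN t vA e3 vB vA _ ltac:(lk) H5 p) as H6.
  apply (dep_eq _ _ _ _ _ H6). unfold tw; rewrite S_INR; ring.
Qed.

Lemma dep_complete t m1 m2 m3 m4 m5 : (m3 = 0%nat -> m4 = 0%nat /\ m5 = 0%nat) ->
  departs t vA vA (tw t m1 m2 m3 m4 m5).
Proof.
  intro V. destruct m3 as [|p].
  - destruct (V eq_refl); subst.
    pose proof (bounceN t vA e1 vA vL1 0 ltac:(lk) (dep_start _ _) m1) as H1.
    pose proof (bounceN t vA e2 vA vL2 _ ltac:(lk) H1 m2) as H2.
    apply (dep_eq _ _ _ _ _ H2). unfold tw; simpl; ring.
  - pose proof (dep_step t vA e3 vB vA _ ltac:(lk) (depB t m1 m2 p m4 m5)) as H.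
    apply (dep_eq _ _ _ _ _ H). ring.
Qed.

Lemma arr_complete t e m1 m2 m3 m4 m5 : (m3 = 0%nat -> m4 = 0%nat /\ m5 = 0%nat) ->
  (e = e1 /\ (m1 > 0)%nat) \/ (e = e2 /\ (m2 > 0)%nat) \/ (e = e3 /\ (m3 > 0)%nat) ->
  arrives t vA e vA (tw t m1 m2 m3 m4 m5).
Proof.
  intros V [[E H]|[[E H]|[E H]]]; subst.
  - destruct m1 as [|p]; [lia|]. exists vL1; split; [lk|].
    pose proof (dep_step t vA e1 vA vL1 _ ltac:(lk) (dep_complete t p m2 m3 m4 m5 V)) as H'.
    apply (dep_eq _ _ _ _ _ H'). unfold tw; rewrite S_INR; ring.
  - destruct m2 as [|p]; [lia|]. exists vL2; split; [lk|].
    pose proof (dep_step t vA e2 vA vL2 _ ltac:(lk) (dep_complete t m1 p m3 m4 m5 V)) as H'.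
    apply (dep_eq _ _ _ _ _ H'). unfold tw; rewrite S_INR; ring.
  - destruct m3 as [|p]; [lia|]. exists vB; split; [lk|]. apply depB.
Qed.

Lemma even_ex n : pz n 0 -> exists k, n = (2 * k)%nat.
Proof. intro H. exists (Z.to_nat (Z.of_nat n / 2)). pl. Qed.
Lemma odd_ex n : pz n 1 -> exists k, n = (2 * k + 1)%nat.
Proof. intro H. exists (Z.to_nat (Z.of_nat n / 2)). pl. Qed.

Lemma INR2 k : INR (2 * k) = 2 * INR k.
Proof. rewrite mult_INR; simpl; ring. Qed.
Lemma INR21 k : INR (2 * k + 1) = 2 * INR k + 1.
Proof. rewrite plus_INR, mult_INR; simpl; ring. Qed.

Lemma depA_sound t s : departs t vA vA s ->
  exists m1 m2 m3 m4 m5, (m3 = 0%nat -> m4 = 0%nat /\ m5 = 0%nat) /\ s = tw t m1 m2 m3 m4 m5.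
Proof.
  intro H. destruct (dep_sound _ _ _ H) as [n1 [n2 [n3 [n4 [n5 [Hs [Hp Hc]]]]]]].
  simpl in Hp. destruct Hp as [P1 [P2 [P3 [P4 P5]]]].
  destruct (even_ex _ P1) as [k1 ->]; destruct (even_ex _ P2) as [k2 ->];
  destruct (even_ex _ P3) as [k3 ->]; destruct (even_ex _ P4) as [k4 ->];
  destruct (even_ex _ P5) as [k5 ->].
  exists k1, k2, k3, k4, k5; split; [lia|]. rewrite Hs; unfold tw; rewrite !INR2; ring.
Qed.

Lemma arr_sound t e s : arrives t vA e vA s ->
  exists m1 m2 m3 m4 m5, (m3 = 0%nat -> m4 = 0%nat /\ m5 = 0%nat) /\ s = tw t m1 m2 m3 m4 m5 /\
  ((e = e1 /\ (m1 > 0)%nat) \/ (e = e2 /\ (m2 > 0)%nat) \/ (e = e3 /\ (m3 > 0)%nat)).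
Proof.
  intros [X [Hl Hd]]. replace s with (s - t e + t e) by ring.
  destruct (dep_sound _ _ _ Hd) as [n1 [n2 [n3 [n4 [n5 [Hs [Hp Hc]]]]]]].
  rewrite Hs. clear Hs Hd.
  destruct e; unfold link in Hl; simpl in Hl; destruct Hl as [Hl|Hl]; inversion Hl; subst;
    simpl in Hp; destruct Hp as [P1 [P2 [P3 [P4 P5]]]].
  - destruct (odd_ex _ P1) as [k1 ->]; destruct (even_ex _ P2) as [k2 ->];
    destruct (even_ex _ P3) as [k3 ->]; destruct (even_ex _ P4) as [k4 ->];
    destruct (even_ex _ P5) as [k5 ->].
    exists (S k1), k2, k3, k4, k5; split; [lia|split; [|left; split; auto; lia]].
    unfold tw; rewrite INR21, !INR2, S_INR; ring.
  - destruct (even_ex _ P1) as [k1 ->]; destruct (odd_ex _ P2) as [k2 ->];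
    destruct (even_ex _ P3) as [k3 ->]; destruct (even_ex _ P4) as [k4 ->];
    destruct (even_ex _ P5) as [k5 ->].
    exists k1, (S k2), k3, k4, k5; split; [lia|split; [|right; left; split; auto; lia]].
    unfold tw; rewrite INR21, !INR2, S_INR; ring.
  - destruct (even_ex _ P1) as [k1 ->]; destruct (even_ex _ P2) as [k2 ->];
    destruct (odd_ex _ P3) as [k3 ->]; destruct (even_ex _ P4) as [k4 ->];
    destruct (even_ex _ P5) as [k5 ->].
    exists k1, k2, (S k3), k4, k5; split; [lia|split; [|right; right; split; auto; lia]].
    unfold tw; rewrite INR21, !INR2, S_INR; ring.
Qed.

Lemma Q2R_inj_Z z : Q2R (inject_Z z) = IZR z.
Proof. unfold Q2R, inject_Z; simpl. field. Qed.

Lemma tw_inj t (HQ : Q_lin_indep5 (t e1) (t e2) (t e3) (t e4) (t e5))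
  a1 a2 a3 a4 a5 b1 b2 b3 b4 b5 :
  tw t a1 a2 a3 a4 a5 = tw t b1 b2 b3 b4 b5 ->
  a1 = b1 /\ a2 = b2 /\ a3 = b3 /\ a4 = b4 /\ a5 = b5.
Proof.
  intro E. unfold tw in E.
  destruct (HQ (inject_Z (Z.of_nat a1 - Z.of_nat b1)) (inject_Z (Z.of_nat a2 - Z.of_nat b2))
     (inject_Z (Z.of_nat a3 - Z.of_nat b3)) (inject_Z (Z.of_nat a4 - Z.of_nat b4))
     (inject_Z (Z.of_nat a5 - Z.of_nat b5))) as [q1 [q2 [q3 [q4 q5]]]].
  - rewrite !Q2R_inj_Z, !minus_IZR, <- !INR_IZR_INZ. lra.
  - unfold Qeq in *; simpl in *. lia.
Qed.

Lemma birth_char t (HQ : Q_lin_indep5 (t e1) (t e2) (t e3) (t e4) (t e5)) T s e :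
  birth t vA vA T (s, e) <->
  exists m1 m2 m3 m4 m5, (m3 = 0%nat -> m4 = 0%nat /\ m5 = 0%nat) /\ s = tw t m1 m2 m3 m4 m5 /\
    s <= T /\ ((e = e1 /\ m1 = 0%nat) \/ (e = e2 /\ m2 = 0%nat) \/ (e = e3 /\ m3 = 0%nat)).
Proof.
  split.
  - intros [Hle [Hd [Hi Hna]]]; simpl in *.
    destruct (depA_sound _ _ Hd) as [m1 [m2 [m3 [m4 [m5 [V Es]]]]]].
    exists m1, m2, m3, m4, m5; split; auto; split; auto; split; auto.
    destruct Hi as [Y Hl]; destruct e; unfold link in Hl; simpl in Hl;
      destruct Hl as [Hl|Hl]; inversion Hl; subst.
    + left; split; auto. destruct m1; auto. exfalso; apply Hna.
      apply arr_complete; auto. left; split; auto; lia.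
    + right; left; split; auto. destruct m2; auto. exfalso; apply Hna.
      apply arr_complete; auto. right; left; split; auto; lia.
    + right; right; split; auto. destruct m3; auto. exfalso; apply Hna.
      apply arr_complete; auto. right; right; split; auto; lia.
  - intros [m1 [m2 [m3 [m4 [m5 [V [Es [Hle C]]]]]]]].
    unfold birth; simpl. split; auto. split; [subst; apply dep_complete; auto|]. split.
    + destruct C as [[-> _]|[[-> _]|[-> _]]]; [exists vL1|exists vL2|exists vB]; lk.
    + intro Ha. destruct (arr_sound _ _ _ Ha) as [k1 [k2 [k3 [k4 [k5 [V' [Es' C']]]]]]].
      rewrite Es in Es'. apply (tw_inj t HQ) in Es'.
      destruct Es' as [? [? [? [? ?]]]]; subst.
      destruct C as [[-> ?]|[[-> ?]|[-> ?]]];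
      destruct C' as [[E ?]|[[E ?]|[E ?]]]; try discriminate; lia.
Qed.

Lemma len1 (n : list nat) : length n = 1%nat -> exists a, n = [a].
Proof. intro H; do 2 (destruct n as [|? n]; simpl in H; try discriminate); eauto. Qed.
Lemma len2 (n : list nat) : length n = 2%nat -> exists a b, n = [a; b].
Proof. intro H; do 3 (destruct n as [|? n]; simpl in H; try discriminate); eauto. Qed.
Lemma len3 (n : list nat) : length n = 3%nat -> exists a b c, n = [a; b; c].
Proof. intro H; do 4 (destruct n as [|? n]; simpl in H; try discriminate); eauto. Qed.
Lemma len4 (n : list nat) : length n = 4%nat -> exists a b c d, n = [a; b; c; d].
Proof. intro H; do 5 (destruct n as [|? n]; simpl in H; try discriminate); eauto 6. Qed.

Ltac dl H :=
  let a := fresh "a" in let b := fresh "b" in let c := fresh "c" in let d := fresh "d" in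
  first [ destruct (len4 _ H) as [a [b [c [d ->]]]]
        | destruct (len3 _ H) as [a [b [c ->]]]
        | destruct (len2 _ H) as [a [b ->]]
        | destruct (len1 _ H) as [a ->] ].

Definition f1a t (n : list nat) := (tw t O (nth O n O) (nth 1 n O) (nth 2 n O) (nth 3 n O), e1).
Definition f1b t (n : list nat) := (tw t O (nth O n O) O O O, e1).
Definition f2a t (n : list nat) := (tw t (nth O n O) O (nth 1 n O) (nth 2 n O) (nth 3 n O), e2).
Definition f2b t (n : list nat) := (tw t (nth O n O) O O O O, e2).
Definition f3 t (n : list nat) := (tw t (nth O n O) (nth 1 n O) O O O, e3).
Definition g (n : list nat) : list nat := [nth 0 n 0; 0; nth 1 n 0; nth 2 n 0]%nat.

Lemma split_count x y z w T k4 k3 :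
  count_is (LS [x; y; z; w] T) k4 -> count_is (LS [x; z; w] T) k3 ->
  exists s, count_is (fun n => LS [x; y; z; w] T n /\ (nth 1 n 0 > 0)%nat) s /\ (s + k3 = k4)%nat.
Proof.
  intros K4 K3.
  destruct (count_subset _ (fun n => LS [x; y; z; w] T n /\ (nth 1 n 0 > 0)%nat) _ K4
              (fun n H => proj1 H)) as [s Ks].
  exists s; split; auto.
  assert (KI := count_image _ g _ K3).
  assert (Kg : count_is (fun y0 => exists x0, LS [x; z; w] T x0 /\ y0 = g x0) k3).
  { apply KI. intros u v [Hu _] [Hv _] E. simpl in Hu, Hv. dl Hu. dl Hv.
    unfold g in E; simpl in E. injection E; intros; subst; auto. }
  assert (KU := count_union _ _ _ _ Ks Kg).
  apply (count_unique (LS [x; y; z; w] T)); auto.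
  apply (count_ext (fun n => (LS [x; y; z; w] T n /\ (nth 1 n 0 > 0)%nat) \/
                             (exists x0, LS [x; z; w] T x0 /\ n = g x0))).
  - intro n. split.
    + intros [[H _]|[u [[Hl Hw] ->]]]; auto. simpl in Hl. dl Hl.
      unfold LS, g in *; simpl in *. split; auto. simpl. lra.
    + intros [Hl Hw]. simpl in Hl. dl Hl. destruct b as [|b].
      * right. exists [a; c; d]. unfold LS, g in *; simpl in *. split; auto. split; auto. lra.
      * left. split; [split|]; auto. simpl; lia.
  - apply KU. intros n [_ H1] [u [_ ->]]. unfold g in H1; simpl in H1; lia.
Qed.

Ltac inj_tac HQ :=
  let u := fresh "u" in let v := fresh "v" in let Hu := fresh "Hu" in
  let Hv := fresh "Hv" in let E := fresh "E" in
  intros u v Hu Hv E;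
  repeat match goal with H : _ /\ _ |- _ => destruct H end;
  repeat match goal with H : LS _ _ _ |- _ => destruct H end;
  repeat match goal with H : length _ = _ |- _ => simpl in H; dl H end;
  unfold f1a, f1b, f2a, f2b, f3 in E; injection E; intros;
  match goal with E' : tw _ _ _ _ _ _ = tw _ _ _ _ _ _ |- _ =>
    apply (tw_inj _ HQ) in E'; simpl in E'; destruct E' as [? [? [? [? ?]]]] end;
  subst; reflexivity.

Ltac disj_tac HQ :=
  let p := fresh "p" in let HA := fresh "HA" in let HB := fresh "HB" in
  intros p HA HB;
  repeat match goal with H : _ \/ _ |- _ => destruct H end;
  repeat match goal with H : exists _, _ |- _ => destruct H as [? [? ?]] end;
  subst p;
  repeat match goal with H : _ /\ _ |- _ => destruct H end;
  repeat match goal with H : LS _ _ _ |- _ => destruct H end;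
  repeat match goal with H : length _ = _ |- _ => simpl in H; dl H end;
  unfold f1a, f1b, f2a, f2b, f3 in *;
  match goal with E : (_, _) = (_, _) |- _ => injection E; intros end;
  try discriminate;
  match goal with E' : tw _ _ _ _ _ _ = tw _ _ _ _ _ _ |- _ =>
    apply (tw_inj _ HQ) in E'; simpl in E'; destruct E' as [? [? [? [? ?]]]] end;
  subst; simpl in *; lia.

Theorem mainTheorem3 (t1 t2 t3 t4 t5 : R) :
  0 < t1 -> 0 < t2 -> 0 < t3 -> 0 < t4 -> 0 < t5 ->
  Q_lin_indep5 t1 t2 t3 t4 t5 ->
  exists C : Z, forall T : R, 0 <= T ->
    Z.of_nat (N_H (tH t1 t2 t3 t4 t5) vA vA T%R) =
      (Z.of_nat (lattice_count [(2*t1)%R; (2*t3)%R; (2*t4)%R; (2*t5)%R] T%R)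
     + Z.of_nat (lattice_count [(2*t2)%R; (2*t3)%R; (2*t4)%R; (2*t5)%R] T%R)
     - Z.of_nat (lattice_count [(2*t1)%R; (2*t4)%R; (2*t5)%R] T%R)
     - Z.of_nat (lattice_count [(2*t2)%R; (2*t4)%R; (2*t5)%R] T%R)
     + Z.of_nat (lattice_count [(2*t1)%R; (2*t2)%R] T%R)
     + Z.of_nat (lattice_count [(2*t1)%R] T%R)
     + Z.of_nat (lattice_count [(2*t2)%R] T%R)
     + C)%Z.
Proof.
  intros p1 p2 p3 p4 p5 HQ. exists 0%Z. intros T _.
  assert (HQ' : Q_lin_indep5 (tH t1 t2 t3 t4 t5 e1) (tH t1 t2 t3 t4 t5 e2)
     (tH t1 t2 t3 t4 t5 e3) (tH t1 t2 t3 t4 t5 e4) (tH t1 t2 t3 t4 t5 e5)) by exact HQ.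
  destruct (LS_finite [(2*t1)%R; (2*t3)%R; (2*t4)%R; (2*t5)%R] T
    ltac:(repeat constructor; lra)) as [k1345 K1345].
  destruct (LS_finite [(2*t2)%R; (2*t3)%R; (2*t4)%R; (2*t5)%R] T
    ltac:(repeat constructor; lra)) as [k2345 K2345].
  destruct (LS_finite [(2*t1)%R; (2*t4)%R; (2*t5)%R] T
    ltac:(repeat constructor; lra)) as [k145 K145].
  destruct (LS_finite [(2*t2)%R; (2*t4)%R; (2*t5)%R] T
    ltac:(repeat constructor; lra)) as [k245 K245].
  destruct (LS_finite [(2*t1)%R; (2*t2)%R] T ltac:(repeat constructor; lra)) as [k12 K12].
  destruct (LS_finite [(2*t1)%R] T ltac:(repeat constructor; lra)) as [k1 K1].
  destruct (LS_finite [(2*t2)%R] T ltac:(repeat constructor; lra)) as [k2 K2].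
  destruct (split_count _ _ _ _ T _ _ K2345 K245) as [s1 [KS1 E1]].
  destruct (split_count _ _ _ _ T _ _ K1345 K145) as [s2 [KS2 E2]].
  set (t := tH t1 t2 t3 t4 t5) in *.
  assert (KB : count_is (birth t vA vA T) ((((s1 + k2) + s2) + k1) + k12)%nat).
  { apply (count_ext (fun p =>
      ((((exists n, (LS [(2*t2)%R; (2*t3)%R; (2*t4)%R; (2*t5)%R] T n /\ (nth 1 n 0 > 0)%nat)
                    /\ p = f1a t n)
      \/ (exists n, LS [(2*t2)%R] T n /\ p = f1b t n))
      \/ (exists n, (LS [(2*t1)%R; (2*t3)%R; (2*t4)%R; (2*t5)%R] T n /\ (nth 1 n 0 > 0)%nat)
                    /\ p = f2a t n))
      \/ (exists n, LS [(2*t1)%R] T n /\ p = f2b t n))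
      \/ (exists n, LS [(2*t1)%R; (2*t2)%R] T n /\ p = f3 t n))).
    - intros [s e]. rewrite (birth_char t HQ'). split.
      + intro H.
        repeat match goal with H : _ \/ _ |- _ => destruct H end;
        destruct H as [x [Hx E]];
        repeat match goal with H : _ /\ _ |- _ => destruct H end;
        repeat match goal with H : LS _ _ _ |- _ => destruct H end;
        repeat match goal with H : length _ = _ |- _ => simpl in H; dl H end;
        injection E; intros; subst; simpl in *.
        * exists 0%nat, a, b, c, d. split; [lia|split; [reflexivity|split]].
          -- unfold tw, t; simpl. lra.
          -- left; auto.
        * exists 0%nat, a, 0%nat, 0%nat, 0%nat. split; [lia|split; [reflexivity|split]].
          -- unfold tw, t; simpl. lra.
          -- left; auto.
        * exists a, 0%nat, b, c, d. split; [lia|split; [reflexivity|split]].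
          -- unfold tw, t; simpl. lra.
          -- right; left; auto.
        * exists a, 0%nat, 0%nat, 0%nat, 0%nat. split; [lia|split; [reflexivity|split]].
          -- unfold tw, t; simpl. lra.
          -- right; left; auto.
        * exists a, b, 0%nat, 0%nat, 0%nat. split; [lia|split; [reflexivity|split]].
          -- unfold tw, t; simpl. lra.
          -- right; right; auto.
      + intros [m1 [m2 [m3 [m4 [m5 [V [Es [Hle C]]]]]]]].
        rewrite Es in Hle. unfold tw, t in Hle; simpl in Hle.
        destruct C as [[-> ->]|[[-> ->]|[-> ->]]].
        * destruct m3 as [|m3].
          -- destruct (V eq_refl) as [-> ->]. left; left; left; right.
             exists [m2]; split; [split; [reflexivity|simpl in *; lra]|rewrite Es; reflexivity].
          -- left; left; left; left.
             exists [m2; S m3; m4; m5]; split; [split; [split; [reflexivity|simpl in *; lra]|simpl; lia]|rewrite Es; reflexivity].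
        * destruct m3 as [|m3].
          -- destruct (V eq_refl) as [-> ->]. left; right.
             exists [m1]; split; [split; [reflexivity|simpl in *; lra]|rewrite Es; reflexivity].
          -- left; left; right.
             exists [m1; S m3; m4; m5]; split; [split; [split; [reflexivity|simpl in *; lra]|simpl; lia]|rewrite Es; reflexivity].
        * destruct (V eq_refl) as [-> ->]. right.
          exists [m1; m2]; split; [split; [reflexivity|simpl in *; lra]|rewrite Es; reflexivity].
    - repeat apply count_union.
      + apply count_image; auto. inj_tac HQ'.
      + apply count_image; auto. inj_tac HQ'.
      + disj_tac HQ'.
      + apply count_image; auto. inj_tac HQ'.
      + disj_tac HQ'.
      + apply count_image; auto. inj_tac HQ'.
      + disj_tac HQ'.
      + apply count_image; auto. inj_tac HQ'.
      + disj_tac HQ'. }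
  unfold N_H. rewrite (ncard_eq _ _ KB).
  rewrite (lattice_count_eq _ _ _ K1345), (lattice_count_eq _ _ _ K2345),
    (lattice_count_eq _ _ _ K145), (lattice_count_eq _ _ _ K245),
    (lattice_count_eq _ _ _ K12), (lattice_count_eq _ _ _ K1), (lattice_count_eq _ _ _ K2).
  lia.
Qed.
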